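(* In the Cross Model on $\mathbb{Z}_K$, for every configuration and all integers $K\ge1$, $n\ge0$, there exists a path of open edges from $(0,0)$ to $(n,0)$ of minimal length (among open paths in $\mathbb{Z}_K$) which uses only horizontal and diagonal edges, except possibly for vertical edges lying in the first column $\{0\}\times[\![-K,K]\!]$.
   Context: Cross Model: $\mathbb{Z}_K=\mathbb{Z}\times[\![-K,K]\!]$ with vertical edges $(i,j)\to(i,j+1)$, horizontal edges $(i,j)\to(i+1,j)$ and diagonal edges $(i,j)\to(i+1,j\pm1)$ (within the strip). Vertical and horizontal edges have length $1$, diagonal edges length $2$. All vertical and diagonal edges are open; each horizontal edge is open or closed (randomly, open with probability $1-\varepsilon$ independently). The length of a path is the sum of the lengths of its edges. *)

(* Defs.v *)
From Stdlib Require Import ZArith List.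
Open Scope Z_scope.

(* Vertices of Z_K = Z x [-K, K], as pairs (column i, row j). *)
Definition vertex := (Z * Z)%type.

Definition in_strip (K : Z) (v : vertex) : Prop := -K <= snd v <= K.

(* A configuration: [w i j = true] iff the horizontal edge
   (i,j) -- (i+1,j) is open.  (Values outside the strip are irrelevant.) *)
Definition config := Z -> Z -> bool.

Inductive edge_kind := Vert | Horiz | Diag.

Definition kind_len (k : edge_kind) : nat :=
  match k with Vert => 1%nat | Horiz => 1%nat | Diag => 2%nat end.

Definition open_edge (K : Z) (w : config) (u v : vertex) (k : edge_kind) : Prop :=
  in_strip K u /\ in_strip K v /\
  match k with
  | Vert => fst u = fst v /\ (snd v = snd u + 1 \/ snd u = snd v + 1)
  | Horiz => snd u = snd v /\
             ((fst v = fst u + 1 /\ w (fst u) (snd u) = true) \/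
              (fst u = fst v + 1 /\ w (fst v) (snd v) = true))
  | Diag => (fst v = fst u + 1 \/ fst u = fst v + 1) /\
            (snd v = snd u + 1 \/ snd u = snd v + 1)
  end.

Fixpoint is_path (K : Z) (w : config) (x : vertex)
    (s : list (edge_kind * vertex)) (y : vertex) : Prop :=
  match s with
  | nil => x = y
  | (k, v) :: s' => open_edge K w x v k /\ is_path K w v s' y
  end.

Fixpoint path_len (s : list (edge_kind * vertex)) : nat :=
  match s with
  | nil => 0%nat
  | (k, _) :: s' => (kind_len k + path_len s')%nat
  end.

Fixpoint vert_only_col0 (x : vertex) (s : list (edge_kind * vertex)) : Prop :=
  match s with
  | nil => True
  | (k, v) :: s' => (k = Vert -> fst x = 0) /\ vert_only_col0 v s'
  end.

(* Main.v *)
Require Import Defs.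
From Stdlib Require Import ZArith List Lia.
Open Scope Z_scope.

Fixpoint g (K : Z) (w : config) (i : nat) (j : Z) : Z :=
  match i with
  | O => Z.abs j
  | S i' =>
    let D1 := if Z_le_dec (-K) (j-1) then g K w i' (j-1) + 2 else g K w i' (j+1) + 2 in
    let D2 := if Z_le_dec (j+1) K then g K w i' (j+1) + 2 else g K w i' (j-1) + 2 in
    Z.min (if w (Z.of_nat i') j then g K w i' j + 1 else D1) (Z.min D1 D2)
  end.

Lemma g_lip K w (HK : 1 <= K) : forall i j, -K <= j -> j + 1 <= K ->
  Z.abs (g K w i j - g K w i (j+1)) <= 1.
Proof.
  induction i as [|i IH]; intros j H1 H2; simpl.
  - lia.
  - assert (A : Z.abs (g K w i j - g K w i (j+1)) <= 1) by (apply IH; lia).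
    assert (B : -K <= j - 1 -> Z.abs (g K w i (j-1) - g K w i j) <= 1).
    { intro. replace j with (j-1+1) at 2 by lia. apply IH; lia. }
    assert (C : j + 2 <= K -> Z.abs (g K w i (j+1) - g K w i (j+1+1)) <= 1).
    { intro. apply IH; lia. }
    replace (j+1-1) with j by lia.
    destruct (w (Z.of_nat i) j), (w (Z.of_nat i) (j+1));
    destruct (Z_le_dec (-K) (j-1)); destruct (Z_le_dec (j+1) K);
    destruct (Z_le_dec (-K) j); destruct (Z_le_dec (j+1+1) K); try lia;
    repeat match goal with H : ?P -> _ |- _ => (assert P by lia; specialize (H ltac:(assumption))) || clear H end;
    lia.
Qed.

Lemma g_lip' K w (HK : 1 <= K) i j j' : -K <= j <= K -> -K <= j' <= K ->
  (j' = j + 1 \/ j = j' + 1) -> Z.abs (g K w i j - g K w i j') <= 1.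
Proof.
  intros H1 H2 [->| ->].
  - apply g_lip; lia.
  - pose proof (g_lip K w HK i j' ltac:(lia) ltac:(lia)). lia.
Qed.

Lemma g_mono K w (HK : 1 <= K) i j : -K <= j <= K -> g K w i j <= g K w (S i) j.
Proof.
  intros Hj; simpl.
  assert (B : -K <= j - 1 -> Z.abs (g K w i (j-1) - g K w i j) <= 1).
  { intro. apply g_lip'; lia. }
  assert (C : j + 1 <= K -> Z.abs (g K w i j - g K w i (j+1)) <= 1).
  { intro. apply g_lip'; lia. }
  destruct (w (Z.of_nat i) j); destruct (Z_le_dec (-K) (j-1)); destruct (Z_le_dec (j+1) K);
  try lia;
  repeat match goal with H : ?P -> _ |- _ => (assert P by lia; specialize (H ltac:(assumption))) || clear H end;
  lia.
Qed.

Lemma g_fwd_h K w i j : w (Z.of_nat i) j = true -> g K w (S i) j <= g K w i j + 1.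
Proof. intros Hw; simpl; rewrite Hw; lia. Qed.

Lemma g_fwd_d K w i j j' : -K <= j' <= K -> (j' = j + 1 \/ j = j' + 1) ->
  g K w (S i) j <= g K w i j' + 2.
Proof.
  intros Hj [->| ->]; simpl.
  - destruct (Z_le_dec (j+1) K); [|lia].
    destruct (w (Z.of_nat i) j); destruct (Z_le_dec (-K) (j-1)); lia.
  - replace (j'+1-1) with j' by lia.
    destruct (Z_le_dec (-K) j'); [|lia].
    destruct (w (Z.of_nat i) (j'+1)); destruct (Z_le_dec (j'+1+1) K); lia.
Qed.

Definition phi K w (v : vertex) := g K w (Z.to_nat (fst v)) (snd v).

Lemma edge_bound K w (HK : 1 <= K) u v k : open_edge K w u v k ->
  phi K w v - phi K w u <= Z.of_nat (kind_len k).
Proof.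
  destruct u as [a b], v as [c d]; unfold open_edge, in_strip, phi; simpl.
  intros [Hu [Hv He]].
  destruct k; simpl.
  - destruct He as [-> Hd]. pose proof (g_lip' K w HK (Z.to_nat c) b d Hu Hv ltac:(lia)). lia.
  - destruct He as [-> [[-> Hw]|[-> Hw]]].
    + destruct (Z_le_dec 0 a).
      * replace (Z.to_nat (a+1)) with (S (Z.to_nat a)) by lia.
        pose proof (g_fwd_h K w (Z.to_nat a) d) as G. rewrite Z2Nat.id in G by lia.
        specialize (G Hw). lia.
      * replace (Z.to_nat (a+1)) with (Z.to_nat a) by lia. lia.
    + destruct (Z_le_dec 0 c).
      * replace (Z.to_nat (c+1)) with (S (Z.to_nat c)) by lia.
        pose proof (g_mono K w HK (Z.to_nat c) d Hv). lia.
      * replace (Z.to_nat (c+1)) with (Z.to_nat c) by lia. lia.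
  - destruct He as [[-> | ->] Hd].
    + destruct (Z_le_dec 0 a).
      * replace (Z.to_nat (a+1)) with (S (Z.to_nat a)) by lia.
        pose proof (g_fwd_d K w (Z.to_nat a) d b Hu ltac:(lia)). lia.
      * replace (Z.to_nat (a+1)) with (Z.to_nat a) by lia.
        pose proof (g_lip' K w HK (Z.to_nat a) b d Hu Hv ltac:(lia)). lia.
    + destruct (Z_le_dec 0 c).
      * replace (Z.to_nat (c+1)) with (S (Z.to_nat c)) by lia.
        pose proof (g_mono K w HK (Z.to_nat c) b Hu).
        pose proof (g_lip' K w HK (Z.to_nat c) b d Hu Hv ltac:(lia)). lia.
      * replace (Z.to_nat (c+1)) with (Z.to_nat c) by lia.
        pose proof (g_lip' K w HK (Z.to_nat c) b d Hu Hv ltac:(lia)). lia.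
Qed.

Lemma path_bound K w (HK : 1 <= K) s : forall x y, is_path K w x s y ->
  phi K w y - phi K w x <= Z.of_nat (path_len s).
Proof.
  induction s as [|[k v] s IH]; simpl; intros x y H.
  - subst; lia.
  - destruct H as [H1 H2]. pose proof (edge_bound K w HK _ _ _ H1).
    pose proof (IH _ _ H2). lia.
Qed.

Lemma is_path_app K w s : forall x y k v, is_path K w x s y -> open_edge K w y v k ->
  is_path K w x (s ++ (k,v)::nil) v.
Proof.
  induction s as [|[k' v'] s IH]; simpl; intros x y k v H1 H2.
  - subst; tauto.
  - destruct H1; split; [assumption|]. eapply IH; eauto.
Qed.

Lemma path_len_app s k v : path_len (s ++ (k,v)::nil) = (path_len s + kind_len k)%nat.
Proof. induction s as [|[k' v'] s IH]; simpl; lia. Qed.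

Lemma vert_app K w s : forall x y k v, is_path K w x s y -> vert_only_col0 x s ->
  (k = Vert -> fst y = 0) -> vert_only_col0 x (s ++ (k,v)::nil).
Proof.
  induction s as [|[k' v'] s IH]; simpl; intros x y k v H1 H2 H3.
  - subst; tauto.
  - destruct H1, H2; split; [assumption|]. eapply IH; eauto.
Qed.

Definition canon K w (i : nat) (j : Z) s :=
  is_path K w (0,0) s (Z.of_nat i, j) /\ Z.of_nat (path_len s) = g K w i j /\
  vert_only_col0 (0,0) s.

Lemma col0_pos K w (m : nat) : Z.of_nat m <= K ->
  exists s, is_path K w (0,0) s (0, Z.of_nat m) /\ path_len s = m /\ vert_only_col0 (0,0) s.
Proof.
  induction m as [|m IH]; intros Hm.
  - exists nil; simpl; auto.
  - destruct IH as [s [H1 [H2 H3]]]; [lia|].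
    exists (s ++ (Vert, (0, Z.of_nat (S m)))::nil). split; [|split].
    + eapply is_path_app; eauto. unfold open_edge, in_strip; cbn [fst snd]; lia.
    + rewrite path_len_app; simpl; lia.
    + eapply vert_app; eauto.
Qed.

Lemma col0_neg K w (m : nat) : Z.of_nat m <= K ->
  exists s, is_path K w (0,0) s (0, - Z.of_nat m) /\ path_len s = m /\ vert_only_col0 (0,0) s.
Proof.
  induction m as [|m IH]; intros Hm.
  - exists nil; simpl; auto.
  - destruct IH as [s [H1 [H2 H3]]]; [lia|].
    exists (s ++ (Vert, (0, - Z.of_nat (S m)))::nil). split; [|split].
    + eapply is_path_app; eauto. unfold open_edge, in_strip; cbn [fst snd]; lia.
    + rewrite path_len_app; simpl; lia.
    + eapply vert_app; eauto.
Qed.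

Lemma canon_ex K w (HK : 1 <= K) i : forall j, -K <= j <= K -> exists s, canon K w i j s.
Proof.
  unfold canon.
  induction i as [|i IH]; intros j Hj.
  - destruct (Z_le_dec 0 j).
    + destruct (col0_pos K w (Z.to_nat j)) as [s [H1 [H2 H3]]]; [lia|].
      rewrite Z2Nat.id in H1 by lia. exists s; simpl; split; [|split]; auto; lia.
    + destruct (col0_neg K w (Z.to_nat (-j))) as [s [H1 [H2 H3]]]; [lia|].
      rewrite Z2Nat.id in H1 by lia. replace (- - j) with j in H1 by lia.
      exists s; simpl; split; [|split]; auto; lia.
  -
    assert (Hdiag : forall j', -K <= j' <= K -> (j' = j+1 \/ j = j'+1) ->
      exists s, is_path K w (0,0) s (Z.of_nat (S i), j) /\ Z.of_nat (path_len s) = g K w i j' + 2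
        /\ vert_only_col0 (0,0) s).
    { intros j' Hj' Hd. destruct (IH j' Hj') as [s [H1 [H2 H3]]].
      exists (s ++ (Diag, (Z.of_nat (S i), j))::nil). split; [|split].
      - eapply is_path_app; eauto. unfold open_edge, in_strip; cbn [fst snd]; lia.
      - rewrite path_len_app; simpl; lia.
      - eapply vert_app; eauto; discriminate. }
    assert (Hhor : w (Z.of_nat i) j = true ->
      exists s, is_path K w (0,0) s (Z.of_nat (S i), j) /\ Z.of_nat (path_len s) = g K w i j + 1
        /\ vert_only_col0 (0,0) s).
    { intros Hw. destruct (IH j Hj) as [s [H1 [H2 H3]]].
      exists (s ++ (Horiz, (Z.of_nat (S i), j))::nil). split; [|split].
      - eapply is_path_app; eauto. unfold open_edge, in_strip; simpl. split; [lia|split;[lia|]].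
        split; [auto|]. left. split; [lia|]. rewrite Hw; auto.
      - rewrite path_len_app; simpl; lia.
      - eapply vert_app; eauto; discriminate. }
    assert (HD1 : exists s, is_path K w (0,0) s (Z.of_nat (S i), j) /\
      Z.of_nat (path_len s) = (if Z_le_dec (-K) (j-1) then g K w i (j-1) + 2 else g K w i (j+1) + 2)
        /\ vert_only_col0 (0,0) s).
    { destruct (Z_le_dec (-K) (j-1)); apply Hdiag; lia. }
    assert (HD2 : exists s, is_path K w (0,0) s (Z.of_nat (S i), j) /\
      Z.of_nat (path_len s) = (if Z_le_dec (j+1) K then g K w i (j+1) + 2 else g K w i (j-1) + 2)
        /\ vert_only_col0 (0,0) s).
    { destruct (Z_le_dec (j+1) K); apply Hdiag; lia. }
    simpl g.
    set (D1 := if Z_le_dec (-K) (j-1) then g K w i (j-1) + 2 else g K w i (j+1) + 2) in *.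
    set (D2 := if Z_le_dec (j+1) K then g K w i (j+1) + 2 else g K w i (j-1) + 2) in *.
    assert (HH : exists s, is_path K w (0,0) s (Z.of_nat (S i), j) /\
      Z.of_nat (path_len s) = (if w (Z.of_nat i) j then g K w i j + 1 else D1)
        /\ vert_only_col0 (0,0) s).
    { destruct (w (Z.of_nat i) j); [apply Hhor; reflexivity | exact HD1]. }
    set (X := if w (Z.of_nat i) j then g K w i j + 1 else D1) in *.
    assert (E : Z.min X (Z.min D1 D2) = X \/ Z.min X (Z.min D1 D2) = D1 \/
                Z.min X (Z.min D1 D2) = D2) by lia.
    destruct E as [E|[E|E]]; rewrite E; assumption.
Qed.

Theorem lemma3 (K n : Z) (w : config) :
  1 <= K -> 0 <= n ->
  exists s : list (edge_kind * vertex),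
    is_path K w (0, 0) s (n, 0) /\
    (forall s' : list (edge_kind * vertex),
        is_path K w (0, 0) s' (n, 0) -> (path_len s <= path_len s')%nat) /\
    vert_only_col0 (0, 0) s.
Proof.
  intros HK Hn.
  destruct (canon_ex K w HK (Z.to_nat n) 0 ltac:(lia)) as [s [H1 [H2 H3]]].
  rewrite Z2Nat.id in H1 by lia.
  exists s. split; [exact H1|split; [|exact H3]].
  intros s' Hs'. pose proof (path_bound K w HK s' _ _ Hs') as B.
  unfold phi in B; simpl in B. rewrite <- H2 in B. lia.
Qed.
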